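(* Suppose we have $n\ge3$ agents with additive, identical, normalized valuations, provided with a $2$-value prediction of accuracy $\eta<1-\frac{2(1-a^2)}{4+(2n-3)a}$ for some given $a\in(0,1]$; that is, the allowed error between the prediction and the true valuation is $1-\eta>\frac{2(1-a^2)}{4+(2n-3)a}$. Then there is no online algorithm that guarantees an $a$-EFX allocation for all instances with error at most $1-\eta$, even when $T'=T=2n-1$.
   Context: Online fair division with predictions and identical valuations: agents $[n]$; goods $g_1,\dots,g_T$ arrive one per time step; all agents share a true additive normalized valuation $v$ ($v(g_t)\ge0$, $\sum_{t\in[T]}v(g_t)=1$, $v(S)=\sum_{g\in S}v(g)$), and before any arrival the algorithm receives a prediction $p=(p(g_1),\dots,p(g_{T'}))$ (an additive normalized valuation over $T'$ predicted goods) and the accuracy level. A $2$-value prediction takes at most $2$ distinct values. Error $\frac12\sum_{t=1}^{\max\{T,T'\}}|p(g_t)-v(g_t)|$ (missing entries set to $0$); accuracy $\eta$ means the error is at most $1-\eta$. At time $t$, $v(g_t)$ is revealed and $g_t$ must be irrevocably allocated. For $S\ne\emptyset$, $\bar S=S\setminus\{g\}$ with $g\in\arg\max_{g'\in S}v(S\setminus\{g'\})$, $\bar\emptyset=\emptyset$. An allocation is $a$-EFX if $v(A_i)\ge a\cdot v(\bar A_j)$ for all $i,j$. *)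

(* Defs.v *)
From HB Require Import structures.
From mathcomp Require Import all_boot all_order all_algebra.
From mathcomp Require Import reals.
Set Implicit Arguments. Unset Strict Implicit. Unset Printing Implicit Defensive.
Import Order.TTheory GRing.Theory Num.Theory.
Local Open Scope ring_scope.

Section OnlineFD.
Variable R : realType.

Definition vset (T : nat) (v : 'I_T -> R) (S : {set 'I_T}) : R :=
  \sum_(g in S) v g.

Definition normalized (T : nat) (v : 'I_T -> R) : Prop :=
  (forall t, 0 <= v t) /\ \sum_(t < T) v t = 1.

Definition two_value (T : nat) (p : 'I_T -> R) : Prop :=
  exists x y : R, forall t, p t = x \/ p t = y.

Definition pred_error (T : nat) (p v : 'I_T -> R) : R :=
  (\sum_(t < T) `|p t - v t|) / 2.

(* S-bar: S minus a good g maximizing v(S \ {g}); empty set stays empty *)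
Definition sbar (T : nat) (v : 'I_T -> R) (S : {set 'I_T}) : {set 'I_T} :=
  match [pick g in S] with
  | Some g0 => S :\ ([arg max_(g > g0 in S) vset v (S :\ g)])%O
  | None => set0
  end.

Definition aEFX (n T : nat) (v : 'I_T -> R) (a : R) (A : 'I_n -> {set 'I_T}) : Prop :=
  forall i j : 'I_n, vset v (A i) >= a * vset v (sbar v (A j)).

(* A deterministic online algorithm: given the prediction p (over T' = T
   predicted goods) and the sequence of values revealed so far
   v(g_1),...,v(g_t) (including the current good), it returns the agent
   receiving the current good g_t. *)
Definition online_alg (n T : nat) := ('I_T -> R) -> seq R -> 'I_n.

Definition prefix (T : nat) (v : 'I_T -> R) (t : 'I_T) : seq R :=
  [seq v s | s <- enum 'I_T & (nat_of_ord s <= nat_of_ord t)%N].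

Definition run (n T : nat) (alg : online_alg n T) (p v : 'I_T -> R) (t : 'I_T) : 'I_n :=
  alg p (prefix v t).

Definition bundles (n T : nat) (alg : online_alg n T) (p v : 'I_T -> R) : 'I_n -> {set 'I_T} :=
  fun i => [set t | run alg p v t == i].

End OnlineFD.

(* Main.v *)
Require Import Defs.
From HB Require Import structures.
From mathcomp Require Import all_boot all_order all_algebra.
From mathcomp Require Import reals.
From mathcomp Require Import zify ring lra.
Import Order.TTheory GRing.Theory Num.Theory.
Local Open Scope ring_scope.
Section H.
Variable R : realType.

Lemma sbar_ge (T : nat) (v : 'I_T -> R) (S : {set 'I_T}) g :
  g \in S -> vset v (S :\ g) <= vset v (sbar v S).
Proof.
move=> gS; rewrite /sbar; case: pickP => [g0 g0S|/(_ g)]; last by rewrite gS.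
by case: arg_maxP => // i _; apply.
Qed.

Lemma vset_sub (T : nat) (v : 'I_T -> R) (A B : {set 'I_T}) :
  (forall t, 0 <= v t) -> A \subset B -> vset v A <= vset v B.
Proof.
move=> v0 AB; rewrite /vset [X in _ <= X](big_setID A) /= (setIidPr AB) lerDl.
by apply: sumr_ge0 => i _.
Qed.

Lemma vset1 (T : nat) (v : 'I_T -> R) x : vset v [set x] = v x.
Proof. by rewrite /vset big_set1. Qed.

Lemma vsetD1 (T : nat) (v : 'I_T -> R) (A : {set 'I_T}) x :
  x \in A -> vset v A = v x + vset v (A :\ x).
Proof. by move=> xA; rewrite /vset (big_setD1 x xA). Qed.

Lemma sum_agents2 (n : nat) (F : 'I_n -> R) j1 j2 : j1 != j2 ->
  \sum_i F i = F j1 + F j2 + \sum_(i | (i != j1) && (i != j2)) F i.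
Proof.
move=> ne; rewrite (bigD1 j1) //= (bigD1 j2) /=; last by rewrite eq_sym.
rewrite addrA; congr (_ + _); apply: eq_bigl => i; by rewrite andbC.
Qed.

Lemma sum_bundles (n T : nat) (f : 'I_T -> 'I_n) (v : 'I_T -> R) :
  \sum_i vset v [set t | f t == i] = \sum_t v t.
Proof.
rewrite (partition_big f xpredT) //=; apply: eq_bigr => i _.
by rewrite /vset; apply: eq_bigl => t; rewrite inE.
Qed.


Lemma sum_ordK2 (N K : nat) (G : nat -> R) : N = K.+2 ->
  \sum_(t < N) G t = \sum_(i < K) G i + G K + G K.+1.
Proof.
move=> ->; rewrite -(big_mkord xpredT G) big_nat_recr //= big_nat_recr //=.
by rewrite big_mkord.
Qed.

Lemma sum_ordK2' (N K : nat) (F : 'I_N -> R) (G : nat -> R) :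
  (forall t : 'I_N, F t = G t) -> N = K.+2 ->
  \sum_(t < N) F t = \sum_(i < K) G i + G K + G K.+1.
Proof.
move=> h NK; transitivity (\sum_(t < N) G t); first by apply: eq_bigr.
exact: sum_ordK2.
Qed.

Lemma sum_constK (K : nat) (c d : R) :
  \sum_(i < K) (if (i < K)%N then c else d) = K%:R * c.
Proof.
rewrite (eq_bigr (fun _ => c)); last by move=> i _; rewrite ltn_ord.
by rewrite sumr_const card_ord mulr_natl.
Qed.

Lemma vset_const (T : nat) (v : 'I_T -> R) (A : {set 'I_T}) c :
  (forall t, t \in A -> v t = c) -> vset v A = #|A|%:R * c.
Proof.
by move=> h; rewrite /vset (eq_bigr (fun _ => c)) // sumr_const mulr_natl.
Qed.

Lemma sum_const_agents (n : nat) (c : R) : \sum_(i < n) c = n%:R * c.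
Proof. by rewrite sumr_const card_ord mulr_natl. Qed.


Lemma vset_ge1 (T : nat) (v : 'I_T -> R) (S : {set 'I_T}) g :
  (forall t, 0 <= v t) -> g \in S -> v g <= vset v S.
Proof. by move=> v0 gS; rewrite -vset1; apply: vset_sub => //; rewrite sub1set. Qed.

Lemma sum_lb1 (n : nat) (F : 'I_n -> R) j c :
  (forall i, c <= F i) -> F j + (n%:R - 1) * c <= \sum_i F i.
Proof.
move=> h; rewrite (bigD1 j) //= lerD2l.
have := sum_const_agents n c; rewrite (bigD1 j) //= => e.
have -> : (n%:R - 1) * c = \sum_(i | i != j) c by rewrite mulrBl -e; ring.
by apply: ler_sum => i _.
Qed.

Lemma sum_lb2 (n : nat) (F : 'I_n -> R) j1 j2 c : j1 != j2 ->
  (forall i, c <= F i) -> F j1 + F j2 + (n%:R - 2) * c <= \sum_i F i.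
Proof.
move=> ne h; rewrite (@sum_agents2 n F j1 j2 ne) lerD2l.
have := sum_const_agents n c; rewrite (@sum_agents2 n (fun _ => c) j1 j2 ne) => e.
have -> : (n%:R - 2) * c = \sum_(i | (i != j1) && (i != j2)) c by rewrite mulrBl -e; ring.
by apply: ler_sum => i _.
Qed.

Lemma sum_ub2 (n : nat) (F : 'I_n -> R) j1 j2 c : j1 != j2 ->
  (forall i, i != j1 -> i != j2 -> F i <= c) ->
  \sum_i F i <= F j1 + F j2 + (n%:R - 2) * c.
Proof.
move=> ne h; rewrite (@sum_agents2 n F j1 j2 ne) lerD2l.
have := sum_const_agents n c; rewrite (@sum_agents2 n (fun _ => c) j1 j2 ne) => e.
have -> : (n%:R - 2) * c = \sum_(i | (i != j1) && (i != j2)) c by rewrite mulrBl -e; ring.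
by apply: ler_sum => i /andP [h1 h2]; apply: h.
Qed.

Lemma arith_a (nR kR s b a : R) : kR + 3 = 2 * nR -> 3 <= nR -> 0 < s ->
  2 * s < a * b -> kR * s + 2 * b = 1 -> 2 * b + (nR - 1) * (a * b) <= 1 -> False.
Proof. move=> *; nra. Qed.
Lemma arith_b (nR kR s b a : R) : kR + 3 = 2 * nR -> 3 <= nR -> 0 < s ->
  2 * s < a * b -> kR * s + 2 * b = 1 -> 2 * b + s + (nR - 2) * (a * b) <= 1 -> False.
Proof. move=> *; nra. Qed.
Lemma arith_c (nR kR s b : R) : kR + 3 = 2 * nR -> 0 < s ->
  kR * s + 2 * b = 1 -> 1 <= 2 * b + (nR - 2) * (2 * s) -> False.
Proof. move=> *; nra. Qed.

Arguments sbar_ge {T v S g}.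
Arguments vset_sub {T v A B}.
Arguments vset_ge1 {T v S g}.
Arguments vsetD1 {T} v {A x}.
Arguments sum_lb1 {n} F j {c}.
Arguments sum_lb2 {n} F {j1 j2 c}.
Arguments arith_a {nR kR s b a}.
Arguments arith_b {nR kR s b a}.
Arguments arith_c {nR kR s b}.

Lemma combi (n K : nat) (a : R) (alg : online_alg R n (2 * n - 1))
  (p v1 v2 : 'I_(2 * n - 1) -> R) (s beta x : R) (kK kK1 : 'I_(2 * n - 1)) :
  (3 <= n)%N -> (2 * n - 1 = K.+2)%N -> val kK = K -> val kK1 = K.+1 ->
  0 < a -> 0 < s -> 0 <= x -> x < 2 * a * s -> 2 * s < a * beta ->
  K%:R * s + 2 * beta = 1 -> (K%:R : R) + 3 = 2 * n%:R ->
  (forall t : 'I_(2 * n - 1), (t < K)%N -> v1 t = s) -> (forall t : 'I_(2 * n - 1), (t < K)%N -> v2 t = s) ->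
  v1 kK = beta -> v1 kK1 = beta -> v2 kK = x ->
  (forall t, 0 <= v1 t) -> (forall t, 0 <= v2 t) ->
  \sum_t v1 t = 1 ->
  aEFX v1 a (bundles alg p v1) -> aEFX v2 a (bundles alg p v2) -> False.
Proof.
move=> n3 NK hkK hkK1 a0 s0 x0 x1 hab hsum kn v1s v2s v1K v1K1 v2K v1p v2p v1sum EF1 EF2.
have tri : forall t : 'I_(2 * n - 1), [\/ (t < K)%N, t = kK | t = kK1].
  move=> t; case: (ltnP t K) => h; first by constructor 1.
  have : (t == K :> nat) || (t == K.+1 :> nat).
    have : (t < K.+2)%N by rewrite -NK ltn_ord.
    lia.
  by case/orP => /eqP e; [constructor 2 | constructor 3]; apply: val_inj; rewrite /= e.
have kne : kK != kK1 by apply/eqP => /(congr1 val); rewrite hkK hkK1; lia.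
pose f1 := run alg p v1.
pose f2 := run alg p v2.
have same : forall t : 'I_(2 * n - 1), (t < K)%N -> f1 t = f2 t.
  move=> t ht; rewrite /f1 /f2 /run /prefix; congr (alg _ _).
  apply/eq_in_map => y; rewrite mem_filter => /andP [yt _].
  by rewrite v1s ?v2s //; apply: leq_ltn_trans yt ht.
pose A1 := bundles alg p v1.
pose A2 := bundles alg p v2.
have A1E : forall t i, (t \in A1 i) = (f1 t == i) by move=> t i; rewrite inE.
have A2E : forall t i, (t \in A2 i) = (f2 t == i) by move=> t i; rewrite inE.
have tot1 : \sum_i vset v1 (A1 i) = 1 by rewrite -v1sum; apply: sum_bundles.
set j1 := f1 kK.
set j2 := f1 kK1.
have Hall : forall j b, b <= vset v1 (sbar v1 (A1 j)) ->
    forall i, a * b <= vset v1 (A1 i).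
  move=> j b hb i; apply: le_trans (EF1 i j).
  by apply: ler_wpM2l => //; exact: ltW.
have hn : 3 <= (n%:R : R) by rewrite (ler_nat R 3 n).
have ja : j1 != j2.
  apply/negP => /eqP e.
  have k1in : kK1 \in A1 j1 :\ kK by rewrite in_setD1 eq_sym kne A1E /= e.
  have kin : kK \in A1 j1 by rewrite A1E.
  have sb : beta <= vset v1 (sbar v1 (A1 j1)).
    apply: le_trans (sbar_ge kin); rewrite -v1K1; exact: vset_ge1.
  have Fj : 2 * beta <= vset v1 (A1 j1).
    rewrite (vsetD1 v1 kin) v1K.
    have := vset_ge1 v1p k1in; rewrite v1K1; lra.
  have := sum_lb1 (fun i => vset v1 (A1 i)) j1 (Hall _ _ sb); rewrite tot1 => h.
  apply: (arith_a kn hn s0 hab hsum); lra.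
have nb : forall t : 'I_(2 * n - 1), (t < K)%N -> (f1 t != j1) && (f1 t != j2).
  move=> t ht.
  have gen : forall b b' : 'I_(2 * n - 1), (K <= b)%N -> b != b' -> v1 b = beta -> v1 b' = beta ->
      f1 b != f1 b' -> f1 t != f1 b.
    move=> b b' Kb bb' vb vb' fb; apply/negP => /eqP e.
    have tb : t != b by apply/eqP => tb; move: ht; rewrite tb ltnNge Kb.
    have bin : b \in A1 (f1 b) :\ t by rewrite in_setD1 A1E eqxx andbT; apply/eqP => bt; move: tb; rewrite bt eqxx.
    have tin : t \in A1 (f1 b) by rewrite A1E e.
    have tin' : t \in A1 (f1 b) :\ b by rewrite in_setD1 tb tin.
    have b'in : b' \in A1 (f1 b') by rewrite A1E.
    have sb : beta <= vset v1 (sbar v1 (A1 (f1 b))).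
      apply: le_trans (sbar_ge tin); rewrite -vb; exact: vset_ge1.
    have F1 : beta + s <= vset v1 (A1 (f1 b)).
      rewrite (vsetD1 v1 (_ : b \in A1 (f1 b))); last by rewrite A1E.
      have := vset_ge1 v1p tin'; rewrite v1s // vb; lra.
    have F2 : beta <= vset v1 (A1 (f1 b')) by rewrite -vb'; exact: vset_ge1.
    have := sum_lb2 (fun i => vset v1 (A1 i)) fb (Hall _ _ sb); rewrite tot1 => h.
    apply: (arith_b kn hn s0 hab hsum); lra.
  apply/andP; split.
    by apply: (gen kK kK1); rewrite ?hkK //.
  by apply: (gen kK1 kK); rewrite ?hkK1 // eq_sym.
have A1j1 : vset v1 (A1 j1) <= beta.
  rewrite -v1K -vset1; apply: vset_sub => //; apply/subsetP => t.
  rewrite A1E inE; case: (tri t) => [h|->|->] /eqP e; [|by rewrite eqxx|].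
    by move: (nb t h); rewrite e eqxx.
  by move: ja e; rewrite /j1 /j2 => ja e; rewrite e eqxx in ja.
have A1j2 : vset v1 (A1 j2) <= beta.
  rewrite -v1K1 -vset1; apply: vset_sub => //; apply/subsetP => t.
  rewrite A1E inE; case: (tri t) => [h|->|->] /eqP e; [|by move: ja e; rewrite /j1 /j2 => ja e; rewrite e eqxx in ja|by rewrite eqxx].
    by move: (nb t h); rewrite e eqxx andbF.
have [i [i1 i2 i3]] : exists i, [/\ i != j1, i != j2 & 2 * s < vset v1 (A1 i)].
  case: (boolP [exists i, [&& i != j1, i != j2 & 2 * s < vset v1 (A1 i)]]).
    by move=> /existsP [i /and3P [h1 h2 h3]]; exists i.
  move=> /existsPn h; exfalso.
  have := @sum_ub2 n (fun i => vset v1 (A1 i)) j1 j2 (2 * s) ja.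
  rewrite tot1 => H.
  have {}H : 1 <= vset v1 (A1 j1) + vset v1 (A1 j2) + (n%:R - 2) * (2 * s).
    apply: H => i h1 h2; have := h i; rewrite h1 h2 /= leNgt.
    by [].
  apply: (arith_c kn s0 hsum); lra.
have Ai_small : forall t : 'I_(2 * n - 1), t \in A1 i -> (t < K)%N.
  move=> t; rewrite A1E; case: (tri t) => [//|->|->] /eqP e.
    by move: i1; rewrite -e eqxx.
  by move: i2; rewrite -e eqxx.
have cardA : vset v1 (A1 i) = #|A1 i|%:R * s.
  by apply: vset_const => t h; apply: v1s; apply: Ai_small.
have c3 : (2 < #|A1 i|)%N by move: i3; rewrite cardA ltr_pM2r // ltr_nat.
have [g gA] : exists g, g \in A1 i by apply/card_gt0P; apply: leq_trans c3.
have c2 : (2 <= #|A1 i :\ g|)%N by move: c3; rewrite (cardsD1 g) gA add1n ltnS.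
pose j := if f2 kK1 == j1 then j2 else j1.
have hj : forall t, t \in A2 j -> t = kK.
  move=> t; rewrite A2E; case: (tri t) => [h|->|->] //.
    rewrite -same // => /eqP e; move: (nb t h); rewrite e /j.
    by case: ifP => _; rewrite eqxx ?andbF.
  rewrite /j; case: ifP => [/eqP -> | /negbT h] /eqP e.
    by move: ja; rewrite e eqxx.
  by move: h; rewrite e eqxx.
have Vj : vset v2 (A2 j) <= x.
  rewrite -v2K -vset1; apply: vset_sub => //; apply/subsetP => t /hj ->.
  by rewrite set11.
have sub : A1 i :\ g \subset A2 i :\ g.
  apply/subsetP => t; rewrite !in_setD1 => /andP [tg tA]; rewrite tg /=.
  by rewrite A2E -same ?(Ai_small t tA) // -A1E.
have gA2 : g \in A2 i by rewrite A2E -same ?(Ai_small g gA) // -A1E.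
have V2 : 2 * s <= vset v2 (sbar v2 (A2 i)).
  apply: le_trans (sbar_ge gA2); apply: le_trans (vset_sub v2p sub).
  rewrite (@vset_const _ _ _ s); last first.
    by move=> t /setD1P [_ tA]; apply: v2s; apply: Ai_small.
  by rewrite ler_pM2r // (ler_nat R 2).
have := EF2 j i.
have : a * (2 * s) <= a * vset v2 (sbar v2 (A2 i)) by apply: ler_wpM2l => //; exact: ltW.
rewrite -/A2 => h1 h2.
have h3 : a * (2 * s) <= x := le_trans h1 (le_trans h2 Vj).
by move: (le_lt_trans h3 x1); rewrite mulrA (mulrC a 2) ltxx.
Qed.

End H.

Theorem theorem4p17 (R : realType) (n : nat) (a eta : R) :
  (3 <= n)%N -> 0 < a -> a <= 1 ->
  eta < 1 - 2 * (1 - a ^+ 2) / (4 + (2 * n - 3)%:R * a) ->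
  ~ exists alg : online_alg R n (2 * n - 1),
      forall p v : 'I_(2 * n - 1) -> R,
        normalized p -> two_value p -> normalized v ->
        pred_error p v <= 1 - eta ->
        aEFX v a (bundles alg p v).
Proof.
move=> n3 a0 a1 heta [alg Halg].
set K := (2 * n - 3)%N in heta.
have NK : (2 * n - 1 = K.+2)%N by rewrite /K; lia.
have K3 : (3 <= K)%N by rewrite /K; lia.
set k : R := K%:R in heta.
have kn : k + 3 = 2 * n%:R.
  have : (K + 3 = 2 * n)%N by rewrite /K; lia.
  by move/(congr1 (fun m => m%:R : R)); rewrite natrD natrM.
have k3 : 3 <= k by rewrite /k (ler_nat R 3 K).
have D0 : 0 < 4 + k * a by nra.
set u : R := 1 / (4 + k * a).
have hu : (4 + k * a) * u = 1 by rewrite /u; field; lra.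
have u0 : 0 < u by rewrite /u divr_gt0.
have hdel : 2 * (1 - a ^+ 2) / (4 + k * a) = 2 * (1 - a ^+ 2) * u.
  by rewrite /u mulrA mulr1.
rewrite hdel in heta.
set eps := 1 - eta - 2 * (1 - a ^+ 2) * u.
have eps0 : 0 < eps by rewrite /eps; lra.
set tau := Num.min (a * u / 2) (eps / (2 * (k + 2))).
have tau0 : 0 < tau.
  rewrite /tau lt_min; apply/andP; split; apply: divr_gt0; nra.
have tau1 : tau <= a * u / 2 by rewrite /tau ge_min lexx.
have tau2 : (k + 2) * tau <= eps / 2.
  have : tau <= eps / (2 * (k + 2)) by rewrite /tau ge_min lexx orbT.
  rewrite ler_pdivlMr; last by nra.
  by move=> h; nra.
set s := a * u - tau.
set beta := 2 * u + k * tau / 2.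
have s0 : 0 < s by rewrite /s; nra.
set gam := Num.min (a * s) (eps / 2).
have gam0 : 0 < gam by rewrite /gam lt_min; apply/andP; split; nra.
have gam1 : gam <= a * s by rewrite /gam ge_min lexx.
have gam2 : gam <= eps / 2 by rewrite /gam ge_min lexx orbT.
set x := 2 * a * s - gam.
have x0 : 0 <= x by rewrite /x; nra.
have x1 : x < 2 * a * s by rewrite /x; lra.
have hab : 2 * s < a * beta by rewrite /s /beta; nra.
have hsum : k * s + 2 * beta = 1 by rewrite /s /beta; nra.
have err1 : k * tau <= 1 - eta by rewrite /eps in tau2; nra.
have err2 : k * tau + 2 * u - x <= 1 - eta by rewrite /x /s /eps in tau2 gam2 *; nra.
have xu : x <= 2 * u by rewrite /s in x1; nra.
have au0 : 0 < a * u by rewrite mulr_gt0.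
have hu' : k * (a * u) + 4 * u = 1.
  by move: hu; rewrite mulrDl mulrA addrC.
have ktau : 0 <= k * tau by rewrite mulr_ge0 // ?ltW //; lra.
have beta0 : 0 < beta by rewrite /beta; lra.
have bx : 0 <= 2 * beta - x by rewrite /beta; lra.
pose pn (m : nat) : R := if (m < K)%N then a * u else 2 * u.
pose v1n (m : nat) : R := if (m < K)%N then s else beta.
pose v2n (m : nat) : R := if (m < K)%N then s else if m == K then x else 2 * beta - x.
pose p0 (t : 'I_(2 * n - 1)) := pn t.
pose v1 (t : 'I_(2 * n - 1)) := v1n t.
pose v2 (t : 'I_(2 * n - 1)) := v2n t.
have hKK : (K < K)%N = false by rewrite ltnn.
have hK1 : (K.+1 < K)%N = false by rewrite ltnNge leqnSn.
have hK1e : (K.+1 == K) = false by rewrite (gtn_eqF (ltnSn K)).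
have Hp0 : normalized p0.
  split; first by move=> t; rewrite /p0 /pn; case: ifP; lra.
  rewrite (@sum_ordK2 R _ _ pn NK) /pn.
  under eq_bigr do rewrite ltn_ord.
  rewrite sum_const_agents hKK hK1 -/k; lra.
have Hp1 : two_value p0.
  by exists (a * u), (2 * u) => t; rewrite /p0 /pn; case: ifP; [left|right].
have Hv1 : normalized v1.
  split; first by move=> t; rewrite /v1 /v1n; case: ifP; lra.
  rewrite (@sum_ordK2 R _ _ v1n NK) /v1n.
  under eq_bigr do rewrite ltn_ord.
  rewrite sum_const_agents hKK hK1 -/k; lra.
have Hv2 : normalized v2.
  split; first by move=> t; rewrite /v2 /v2n; case: ifP => _; [|case: ifP]; lra.
  rewrite (@sum_ordK2 R _ _ v2n NK) /v2n.
  under eq_bigr => i _ do rewrite ltn_ord.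
  rewrite sum_const_agents hKK hK1 hK1e eqxx -/k; lra.
have E1 : pred_error p0 v1 <= 1 - eta.
  rewrite /pred_error (@sum_ordK2' R _ _ (fun t => `|p0 t - v1 t|) (fun m => `|pn m - v1n m|) (fun t => erefl) NK) /pn /v1n.
  under eq_bigr => i _ do rewrite ltn_ord.
  rewrite sum_const_agents hKK hK1 -/k.
  have -> : a * u - s = tau by rewrite /s; ring.
  have -> : 2 * u - beta = - (k * tau / 2) by rewrite /beta; ring.
  rewrite normrN !ger0_norm; lra.
have E2 : pred_error p0 v2 <= 1 - eta.
  rewrite /pred_error (@sum_ordK2' R _ _ (fun t => `|p0 t - v2 t|) (fun m => `|pn m - v2n m|) (fun t => erefl) NK) /pn /v2n.
  under eq_bigr => i _ do rewrite ltn_ord.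
  rewrite sum_const_agents hKK hK1 hK1e eqxx -/k.
  have -> : a * u - s = tau by rewrite /s; ring.
  have -> : 2 * u - (2 * beta - x) = - (2 * u + k * tau - x) by rewrite /beta; field.
  rewrite normrN !ger0_norm; lra.
have EF1 := Halg p0 v1 Hp0 Hp1 Hv1 E1.
have EF2 := Halg p0 v2 Hp0 Hp1 Hv2 E2.
have kKlt : (K < 2 * n - 1)%N by rewrite NK.
have kK1lt : (K.+1 < 2 * n - 1)%N by rewrite NK.
pose kK : 'I_(2 * n - 1) := Ordinal kKlt.
pose kK1 : 'I_(2 * n - 1) := Ordinal kK1lt.
apply: (@combi R n K a alg p0 v1 v2 s beta x kK kK1 n3 NK erefl erefl
  a0 s0 x0 x1 hab hsum kn _ _ _ _ _ (proj1 Hv1) (proj1 Hv2) (proj2 Hv1) EF1 EF2).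
- by move=> t ht; rewrite /v1 /v1n ht.
- by move=> t ht; rewrite /v2 /v2n ht.
- by rewrite /v1 /v1n /= hKK.
- by rewrite /v1 /v1n /= hK1.
- by rewrite /v2 /v2n /= hKK eqxx.
Qed.
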